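(* Let $k\ge 1$ be an integer, let $H$ be a multigraph with feedback vertex number at most $k$ in which every vertex has degree at least 3, and let $B\subseteq V(H)$ be a $k$-significant subset of vertices of $H$. Then the feedback vertex number of $H-B$ is at most $k-1$.
   Context: Multigraphs are undirected and may contain parallel edges and self-loops; a self-loop is a cycle of length one and two parallel edges form a cycle of length two; the degree of a vertex is the number of incident edges, with self-loops counted twice. The feedback vertex number is the minimum number of vertices whose removal leaves an acyclic multigraph. A subset $B\subseteq V(H)$ is $k$-significant if $|B|\le 12k$ and $B$ contains every vertex of $H$ of degree at least $|E(H)|/(3k)$. *)

(* Defs.v *)
From mathcomp Require Import all_boot all_order.
Set Implicit Arguments. Unset Strict Implicit. Unset Printing Implicit Defensive.

(* A multigraph on vertex type V with edge type E: each edge e has an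
   (unordered) pair of endpoints [ends e]; self-loops are edges with equal
   endpoints, parallel edges are distinct edges with the same endpoints. *)
Section Multigraph.
Variables (V E : finType) (ends : E -> V * V).

Definition joins (e : E) (x y : V) : bool :=
  (ends e == (x, y)) || (ends e == (y, x)).

(* degree, self-loops counted twice *)
Definition mdeg (v : V) : nat :=
  #|[set e | (ends e).1 == v]| + #|[set e | (ends e).2 == v]|.

(* Length 1 = self-loop, length 2 = two parallel edges. *)
Definition has_cycle_in (X : {set V}) : Prop :=
  exists n (v : 'I_n.+1 -> V) (e : 'I_n.+1 -> E),
    [/\ injective v, injective e, (forall i, v i \in X)
      & forall i, joins (e i) (v i) (v (ordS i))].

Definition acyclic_in (X : {set V}) : Prop := ~ has_cycle_in X.

Definition fvn_le (X : {set V}) (k : nat) : Prop :=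
  exists S : {set V}, [/\ S \subset X, #|S| <= k & acyclic_in (X :\: S)].

(* B is k-significant: |B| <= 12k and B contains every vertex of degree
   at least |E(H)|/(3k)  (written as 3k * deg v >= |E|). *)
Definition significant (k : nat) (B : {set V}) : Prop :=
  #|B| <= 12 * k /\ forall v, #|E| <= 3 * k * mdeg v -> v \in B.

End Multigraph.

(* Main.v *)
Require Import Defs.
From mathcomp Require Import all_boot all_order zify.
Set Implicit Arguments. Unset Strict Implicit. Unset Printing Implicit Defensive.

Section S.
Variables (V E : finType) (ends : E -> V * V).

Lemma joinsC e x y : joins ends e x y = joins ends e y x.
Proof. by rewrite /joins orbC. Qed.

Lemma acyclic_sub (X Y : {set V}) : Y \subset X -> acyclic_in ends X -> acyclic_in ends Y.
Proof.
move=> sYX hX [n [v [e [iv ie vY he]]]]; apply: hX.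
exists n, v, e; split=> // i; exact: (subsetP sYX).
Qed.

Lemma cycle_of_seq (X : {set V}) (x0 : V) (y0 : E) (c : seq V) (d : seq E) :
  size c = size d -> 0 < size c -> uniq c -> uniq d -> {subset c <= X} ->
  (forall j, j < size c -> joins ends (nth y0 d j) (nth x0 c j) (nth x0 c (j.+1 %% size c))) ->
  has_cycle_in ends X.
Proof.
move=> hs hc uc ud sc hj.
set n := (size c).-1.
have hn : n.+1 = size c by rewrite /n prednK.
exists n, (fun i : 'I_n.+1 => nth x0 c i), (fun i : 'I_n.+1 => nth y0 d i); split.
- move=> i j /eqP; rewrite nth_uniq // ?(leq_trans (ltn_ord _)) ?hn // => /eqP; exact: val_inj.
- move=> i j /eqP; rewrite nth_uniq // -?hs ?(leq_trans (ltn_ord _)) ?hn // => /eqP; exact: val_inj.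
- move=> i; apply: sc; apply: mem_nth; by rewrite -hn.
- move=> i; have := hj i; rewrite -hn => /(_ (ltn_ord i)) //.
Qed.

Definition ideg (X : {set V}) v :=
  #|[set e | ((ends e).1 == v) && ((ends e).2 \in X)]| +
  #|[set e | ((ends e).2 == v) && ((ends e).1 \in X)]|.

Lemma pick_edge (X : {set V}) v (g : option E) :
  2 <= ideg X v ->
  (forall e, g = Some e -> (ends e).1 != (ends e).2) ->
  exists f w, [/\ w \in X, joins ends f v w & g != Some f].
Proof.
rewrite /ideg; set A1 := [set e | _]; set A2 := [set e | _] => h2 hg.
case: (pickP [pred f | (f \in A1) && (g != Some f)]) => [f /andP[] | h1].
  rewrite inE => /andP[/eqP f1 f2] fg; exists f, (ends f).2; split=> //.
  by rewrite /joins -f1; case: (ends f) => a b; rewrite eqxx.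
case: (pickP [pred f | (f \in A2) && (g != Some f)]) => [f /andP[] | h3].
  rewrite inE => /andP[/eqP f1 f2] fg; exists f, (ends f).1; split=> //.
  by rewrite /joins -f1; case: (ends f) => a b; rewrite eqxx orbT.
exfalso; move: h2; case: g hg h1 h3 => [e|] hg h1 h3.
- have c1 : #|A1 :\ e| = 0.
    apply/eqP; rewrite cards_eq0; apply/eqP/setP => f; rewrite in_setD1 in_set0.
    have := h1 f; rewrite /=; case: (f \in A1); rewrite ?andbF ?andbT //= => /negbFE/eqP [->].
    by rewrite eqxx.
  have c2 : #|A2 :\ e| = 0.
    apply/eqP; rewrite cards_eq0; apply/eqP/setP => f; rewrite in_setD1 in_set0.
    have := h3 f; rewrite /=; case: (f \in A2); rewrite ?andbF ?andbT //= => /negbFE/eqP [->].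
    by rewrite eqxx.
  rewrite (cardsD1 e A1) (cardsD1 e A2) c1 c2 !addn0.
  case eA1: (e \in A1); case eA2: (e \in A2) => //.
  move: eA1 eA2; rewrite !inE => /andP[/eqP a _] /andP[/eqP b _].
  by move: (hg e erefl); rewrite a b eqxx.
- have c1 : #|A1| = 0.
    apply/eqP; rewrite cards_eq0; apply/eqP/setP => f; rewrite !inE.
    by have := h1 f; rewrite /= andbT inE.
  have c2 : #|A2| = 0.
    apply/eqP; rewrite cards_eq0; apply/eqP/setP => f; rewrite !inE.
    by have := h3 f; rewrite /= andbT inE.
  by rewrite c1 c2.
Qed.

Lemma joins_end f x y a b : joins ends f x y -> joins ends f a b -> x = a \/ x = b.
Proof.
rewrite /joins; case: (ends f) => c d.
by case/orP=> /eqP [h1 h2]; case/orP=> /eqP [h3 h4]; subst; auto.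
Qed.

Definition is_path (X : {set V}) (v0 : V) (e0 : E) (p : seq V) (q : seq E) :=
  [/\ size p = (size q).+1, uniq p, uniq q, {subset p <= X} &
      forall j, j < size q -> joins ends (nth e0 q j) (nth v0 p j) (nth v0 p j.+1)].

Lemma grow (X : {set V}) v0 e0 :
  (forall v, v \in X -> 2 <= ideg X v) -> acyclic_in ends X ->
  forall p q, is_path X v0 e0 p q ->
  exists p' q', is_path X v0 e0 p' q' /\ size p' = (size p).+1.
Proof.
move=> hd hac [|v p1] q [//= hs up uq sp hj].
have hs' : size p1 = size q by case: hs.
have vX : v \in X by apply: sp; rewrite inE eqxx.
have hg : forall e, (if q is e :: _ then Some e else None) = Some e -> (ends e).1 != (ends e).2.
  move=> e; case: q hs hs' uq hj => [|e' q'] //= hs hs' uq hj [<-].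
  have := hj 0 erefl; rewrite /= /joins.
  case: p1 hs hs' up {sp hj} => [|y p2] //= _ _ /andP[]; rewrite inE negb_or => /andP[vy _] _.
  case: (ends e') => a b /= /orP[] /eqP[ea eb]; subst => //; by rewrite eq_sym.
have [f [w [wX fvw gf]]] := pick_edge (hd v vX) hg.
have fq : f \notin q.
  apply/negP => fq.
  have ji : index f q < size q by rewrite index_mem.
  have nf : nth e0 q (index f q) = f by rewrite nth_index.
  move: gf ji nf; case: (index f q) => [|j].
    by case: q {hs hs' uq hj fq hg} => [|e q'] //= + _ ef; rewrite ef eqxx.
  move=> _ ji nf; have := hj _ ji; rewrite nf => /(joins_end fvw) [].
  - move=> /eqP; rewrite {1}(_ : v = nth v0 (v :: p1) 0) // nth_uniq //=.
    by rewrite hs' ltnS ltnW.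
  - move=> /eqP; rewrite {1}(_ : v = nth v0 (v :: p1) 0) // (_ : nth v0 p1 j.+1 = nth v0 (v :: p1) j.+2) // nth_uniq //=.
    by rewrite hs' ltnS.
case wp: (w \in v :: p1); last first.
  exists (w :: v :: p1), (f :: q); split => //; split.
  - by rewrite /= hs'.
  - by rewrite cons_uniq wp.
  - by rewrite cons_uniq fq.
  - move=> x; rewrite inE => /orP[/eqP -> // | ]; exact: sp.
  - case=> [|j] /= jl; first by rewrite joinsC.
    exact: hj.
exfalso; apply: hac.
set i := index w (v :: p1).
have ip : i < (size p1).+1 by rewrite /i (_ : (size p1).+1 = size (v :: p1)) // index_mem.
have wi : nth v0 (v :: p1) i = w by rewrite nth_index.
have wt : w \notin take i (v :: p1) by rewrite in_take // ltnn.
clearbody i.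
have sc : size (w :: take i (v :: p1)) = i.+1 by rewrite /= size_takel // ltnW.
apply: (@cycle_of_seq X v0 e0 (w :: take i (v :: p1)) (f :: take i q)).
- by rewrite sc /= size_takel // -hs' -ltnS.
- by rewrite sc.
- by rewrite cons_uniq wt take_uniq.
- rewrite cons_uniq take_uniq // andbT; apply/negP => /mem_take; exact/negP.
- move=> x; rewrite inE => /orP[/eqP -> // | /mem_take]; exact: sp.
rewrite sc; case=> [|j] jl.
  case: i {ip wt sc jl} wi => [|i] wi.
    rewrite modnn /=; move: wi => /= wv; subst w; exact: fvw.
  rewrite (@modn_small 1 i.+2) // /= joinsC; exact: fvw.
have jq : j < size q by rewrite -hs' -ltnS (leq_trans jl).
rewrite /= nth_take // nth_take //.
case: (ltngtP j.+1 i) => hji.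
- rewrite modn_small //= nth_take //; exact: hj.
- by move: jl; rewrite ltnS leqNgt hji.
- rewrite -hji modnn /= -wi -hji; exact: hj.
Qed.

Lemma deg2 (X : {set V}) : acyclic_in ends X -> X != set0 ->
  (forall v, v \in X -> 2 <= ideg X v) -> False.
Proof.
move=> hac /set0Pn [x0 x0X] hd.
have [e0 _] := pick_edge (g := None) (hd x0 x0X) (fun e (h : None = Some e) => False_ind _ (@eq_ind _ None (fun o => if o is None then True else False) I _ h)).
have hm : forall m, exists p q, is_path X x0 e0 p q /\ size p = m.+1.
  elim=> [|m [p [q [hp hs]]]].
    exists [:: x0], [::]; split=> //; split=> //.
    by move=> x; rewrite inE => /eqP ->.
  rewrite -hs; exact: grow hp.
have [p [q [[_ up _ sp _] hs]]] := hm #|X|.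
have hsub : {subset p <= enum X} by move=> x hx; rewrite mem_enum; apply: sp.
have := uniq_leq_size up hsub.
by rewrite hs -cardE ltnn.
Qed.

Lemma cardU_le (T : finType) (A B : {set T}) : #|A :|: B| <= #|A| + #|B|.
Proof. by rewrite cardsU leq_subr. Qed.

Lemma forest (X : {set V}) : acyclic_in ends X ->
  #|[set e | ((ends e).1 \in X) && ((ends e).2 \in X)]| <= #|X|.
Proof.
move: {2}#|X| (leqnn #|X|) => n; elim: n X => [|n IH] X hX hac.
  move: hX; rewrite leqn0 cards_eq0 => /eqP ->.
  by rewrite (_ : [set e | _] = set0) ?cards0 //; apply/setP => e; rewrite !inE.
case X0: (X == set0).
  move/eqP: X0 => ->.
  by rewrite (_ : [set e | _] = set0) ?cards0 //; apply/setP => e; rewrite !inE.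
case: (pickP [pred v | (v \in X) && (ideg X v < 2)]) => [x /andP[xX hx] | hno]; last first.
  exfalso; apply: (deg2 hac (negbT X0)) => v vX.
  by have := hno v; rewrite /= vX /= => /negbT; rewrite -leqNgt.
have hcX : #|X| = (#|X :\ x|).+1 by rewrite (cardsD1 x X) xX.
have hX' : #|X :\ x| <= n by rewrite -ltnS -hcX.
have hac' := acyclic_sub (subsetDl X [set x]) hac.
have := IH _ hX' hac'.
move: hx; rewrite /ideg; set A1 := [set e | _]; set A2 := [set e | _] => hx hI.
set I := [set e | _ && _].
have sub : I \subset [set e | ((ends e).1 \in X :\ x) && ((ends e).2 \in X :\ x)] :|: (A1 :|: A2).
  apply/subsetP => e; rewrite !inE.
  case/andP=> h1 h2; rewrite h1 h2 !andbT.
  by case: ((ends e).1 =P x); case: ((ends e).2 =P x).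
have := subset_leq_card sub.
have := cardU_le [set e | ((ends e).1 \in X :\ x) && ((ends e).2 \in X :\ x)] (A1 :|: A2).
have := cardU_le A1 A2.
rewrite hcX; lia.
Qed.

Lemma card_sum (P : pred E) : #|[set e | P e]| = \sum_e (P e : nat).
Proof. rewrite -sum1_card big_mkcond; apply: eq_bigr => e _; rewrite inE; by case: (P e). Qed.

Lemma cardE_sum : #|E| = \sum_(e : E) 1.
Proof. by rewrite -sum1_card; apply: eq_bigl => e; rewrite inE. Qed.

Lemma sum_eq1 (A : {set V}) x : \sum_(v in A) (x == v : nat) = (x \in A).
Proof.
case xA: (x \in A).
  rewrite (bigD1 x) //= eqxx big1 // => v /andP[_ vx]; by rewrite eq_sym (negbTE vx).
rewrite big1 // => v vA; case: eqP => // xv; subst; by rewrite vA in xA.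
Qed.

Lemma degsum (A : {set V}) :
  \sum_(v in A) mdeg ends v = \sum_e (((ends e).1 \in A) + ((ends e).2 \in A)).
Proof.
rewrite (eq_bigr (fun v => \sum_e (((ends e).1 == v) + ((ends e).2 == v)))); last first.
  by move=> v _; rewrite /mdeg !card_sum big_split.
rewrite exchange_big /=; apply: eq_bigr => e _; rewrite big_split /=.
by rewrite !sum_eq1.
Qed.
End S.

Unset Implicit Arguments.
Set Strict Implicit.

Theorem corollary6p2 (V E : finType) (ends : E -> V * V) (k : nat) (B : {set V}) :
  1 <= k ->
  fvn_le ends [set: V] k ->
  (forall v : V, 3 <= mdeg ends v) ->
  significant ends k B ->
  fvn_le ends (~: B) (k - 1).
Proof.
move=> k1 [S [_ hSk hac]] hdeg [_ hB].
exists (S :\: B); split.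
- by apply/subsetP => x; rewrite !inE; case/andP.
- have hID := cardsID B S.
  case: (set0Pn (S :&: B)) => [[x xSB] | hSB].
    have : 0 < #|S :&: B| by apply/card_gt0P; exists x.
    lia.
  suff S0 : #|S| = 0 by lia.
  have hv : forall v, v \in S -> 3 * k * mdeg ends v < #|E|.
    move=> v vS; rewrite ltnNge; apply/negP => /hB vB.
    by apply: hSB; exists v; rewrite inE vS vB.
  rewrite setTD in hac.
  have hf := forest hac; rewrite card_sum in hf.
  have h3 : 3 * #|~: S| <= \sum_(v in ~: S) mdeg ends v.
    by rewrite mulnC -sum_nat_const; apply: leq_sum => v _; exact: hdeg.
  rewrite degsum big_split /= in h3.
  have key : #|E| <= 2 * \sum_(v in S) mdeg ends v.
    rewrite degsum cardE_sum.
    have pe : \sum_e (1 + ((ends e).1 \in ~: S) + ((ends e).2 \in ~: S)) <=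
              \sum_e (((ends e).1 \in S) + ((ends e).1 \in S) + ((ends e).2 \in S) + ((ends e).2 \in S)
                + (((ends e).1 \in ~: S) && ((ends e).2 \in ~: S))
                + (((ends e).1 \in ~: S) && ((ends e).2 \in ~: S))
                + (((ends e).1 \in ~: S) && ((ends e).2 \in ~: S))).
      by apply: leq_sum => e _; rewrite !inE; case: (_ \in S); case: (_ \in S).
    rewrite !big_split /= in pe.
    rewrite big_split /=.
    lia.
  have hs : \sum_(v in S) (3 * k * mdeg ends v + 1) <= \sum_(v in S) #|E|.
    by apply: leq_sum => v vS; rewrite addn1; exact: hv.
  rewrite big_split /= sum1_card sum_nat_const -big_distrr /= in hs.
  have := leq_mul hSk (leqnn #|E|).
  have := leq_mul (leqnn k) key.
  set T := \sum_(i in S) mdeg ends i; have hs2 : 3 * k * T + #|S| <= #|S| * #|E| := hs; rewrite -mulnA in hs2; rewrite mulnCA; lia.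
- refine (acyclic_sub _ hac); apply/subsetP => x; rewrite !inE.
  by case: (x \in B); case: (x \in S).
Qed.
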